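(* Let $\mathcal{M}$ be an $\mathbb{A}$-submodule of $\mathbb{A}^K$, $a_1,\dots,a_K\in\mathbb{Z}^n$ and $I,J\subseteq\{1,\dots,K\}$. Suppose that for every $v\in\mathbb{R}^n\setminus\{0\}$ there exists $\boldsymbol f_v\in\mathcal{M}$ with $\mathrm{in}_v(\boldsymbol f_v)\in(\mathbb{A}^+)^K$ and such that, writing $I'=M_v(I,\boldsymbol f_v)$ and $J'=O_v\cup J$, $(O_w\cup J')\cap M_w(I',\mathrm{in}_v(\boldsymbol f_v))\ne\emptyset$ for all $w\in\mathbb{R}^n\setminus\{0\}$. Then there exists $\boldsymbol f\in\mathcal{M}$ such that (i) $\mathrm{in}_v(\boldsymbol f)\in(\mathbb{A}^+)^K$ for all $v\in\mathbb{R}^n\setminus\{0\}$, and (ii) $(O_v\cup J)\cap M_v(I,\boldsymbol f)\ne\emptyset$ for all $v\in\mathbb{R}^n\setminus\{0\}$.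
   Context: $\mathbb{A}=\mathbb{R}[X_1^{\pm1},\dots,X_n^{\pm1}]$, $\mathbb{A}^+=\mathbb{R}_{\ge0}[X_1^{\pm1},\dots,X_n^{\pm1}]\setminus\{0\}$. For $f=\sum c_bX^b\ne0$: $\deg_v(f)=\max\{v\cdot b:c_b\neq0\}$, $\deg_v(0)=-\infty$, $\mathrm{in}_v(f)=\sum_{v\cdot b=\deg_v f}c_bX^b$, componentwise on vectors. $M_v(I,\boldsymbol f)=\{i\in I:\deg_v(f_i)=\max_{i'\in I}\deg_v(f_{i'})\}$; $O_v=\{i:a_i\not\perp v\}$. *)

(* Defs.v *)
From HB Require Import structures.
From mathcomp Require Import all_boot all_order all_algebra.
From mathcomp Require Import all_classical all_reals ereal.
Set Implicit Arguments. Unset Strict Implicit. Unset Printing Implicit Defensive.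
Import Order.TTheory GRing.Theory Num.Theory.
Local Open Scope ring_scope.
Local Open Scope classical_set_scope.

(* Laurent polynomials in n variables over R: finitely supported functions
   Z^n -> R, exponents b : 'rV[int]_n, coefficient of X^b is f b. *)
Section Laurent.
Variables (R : realType) (n : nat).
Definition expo := 'rV[int]_n.
Definition lpoly := expo -> R.

Definition finsupp (f : lpoly) : Prop := exists s : seq expo, forall b, f b != 0 -> b \in s.

(* product a * f of Laurent polynomials, computed over a duplicate-free
   sequence s covering the support of a *)
Definition lmul (a f : lpoly) (s : seq expo) : lpoly :=
  fun b => \sum_(c <- s) a c * f (b - c).

Definition vdot (v : 'rV[R]_n) (b : expo) : R := \sum_(i < n) v 0 i * (b 0 i)%:~R.

(* deg_v f = max{ v.b : c_b <> 0 }, and -oo for f = 0 *)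
Definition degv (v : 'rV[R]_n) (f : lpoly) : \bar R :=
  ereal_sup [set (vdot v b)%:E | b in [set b | f b != 0]].

Definition initv (v : 'rV[R]_n) (f : lpoly) : lpoly :=
  fun b => if ((vdot v b)%:E == degv v f) then f b else 0.

Definition Apos (f : lpoly) : Prop := finsupp f /\ (forall b, 0 <= f b) /\ exists b, f b != 0.

Variable K : nat.
Definition lvec := 'I_K -> lpoly.

Definition Asubmodule (M : set lvec) : Prop :=
  [/\ forall F, M F -> forall i, finsupp (F i),
      M (fun _ _ => 0),
      forall F G, M F -> M G -> M (fun i b => F i b + G i b) &
      forall (a : lpoly) (s : seq expo) F, finsupp a -> uniq s ->
        (forall c, a c != 0 -> c \in s) -> M F -> M (fun i => lmul a (F i) s)].

Local Open Scope ereal_scope.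
Definition Mv (v : 'rV[R]_n) (I : {set 'I_K}) (F : lvec) : {set 'I_K} :=
  [set i in I | degv v (F i) == \big[maxe/-oo]_(i' in I) degv v (F i')].

Definition Ov (a : 'I_K -> expo) (v : 'rV[R]_n) : {set 'I_K} :=
  [set i | vdot v (a i) != 0%R].

Definition initv_vec (v : 'rV[R]_n) (F : lvec) : lvec := fun i => initv v (F i).
End Laurent.

(* Main.v *)
Require Import Defs.
From HB Require Import structures.
From mathcomp Require Import all_boot all_order all_algebra.
From mathcomp Require Import all_classical all_reals ereal.
From mathcomp Require Import ring lra.
Import Order.TTheory GRing.Theory Num.Theory.
Set Implicit Arguments. Unset Strict Implicit. Unset Printing Implicit Defensive.
Local Open Scope ring_scope.

Lemma degv_wit (R : realType) n (v : 'rV[R]_n) (f : lpoly R n) b0 :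
  f b0 != 0 -> (forall b, f b != 0 -> vdot v b <= vdot v b0) ->
  degv v f = (vdot v b0)%:E.
Proof.
move=> fb0 hmax; apply/le_anti/andP; split.
- apply: ge_ereal_sup => _ [b /= fb <-]; rewrite lee_fin; exact: hmax.
- by apply: ereal_sup_ubound; exists b0.
Qed.

Lemma seq_argmax (T : eqType) (R : realDomainType) (g : T -> R) (s : seq T) x0 :
  x0 \in s -> exists2 x, x \in s & forall y, y \in s -> g y <= g x.
Proof.
elim: s x0 => // x s IH x0; rewrite inE => _.
case: s IH => [|y s] IH.
  by exists x; rewrite ?inE // => z; rewrite inE => /eqP ->.
have [z zs hz] := IH y (mem_head _ _).
have [hxz|hzx] := lerP (g x) (g z).
  exists z; first by rewrite inE zs orbT.
  by move=> t; rewrite inE => /orP[/eqP ->|/hz].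
exists x; first exact: mem_head.
move=> t; rewrite inE => /orP[/eqP -> //|/hz ht].
exact: le_trans ht (ltW hzx).
Qed.

Lemma top_wit (R : realType) n (v : 'rV[R]_n) (f : lpoly R n) :
  finsupp f -> (exists b, f b != 0) ->
  exists b0, f b0 != 0 /\ forall b, f b != 0 -> vdot v b <= vdot v b0.
Proof.
move=> [s hs] [b1 hb1].
have : b1 \in [seq b <- s | f b != 0] by rewrite mem_filter hb1 hs.
move=> /(@seq_argmax _ _ (vdot v)) [b0]; rewrite mem_filter => /andP[fb0 _] hm.
by exists b0; split => // b fb; apply: hm; rewrite mem_filter fb hs.
Qed.

Lemma initv_wit (R : realType) n (v : 'rV[R]_n) (f : lpoly R n) b0 :
  f b0 != 0 -> (forall b, f b != 0 -> vdot v b <= vdot v b0) ->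
  forall b, initv v f b = if vdot v b == vdot v b0 then f b else 0.
Proof. by move=> h1 h2 b; rewrite /initv (degv_wit h1 h2) eqe. Qed.

Lemma MvP (R : realType) n K (v : 'rV[R]_n) (I : {set 'I_K}) (F : lvec R n K)
  (g : 'I_K -> R) i :
  (forall i, i \in I -> degv v (F i) = (g i)%:E) ->
  (i \in Mv v I F) = (i \in I) && [forall i' in I, g i' <= g i].
Proof.
move=> hg; rewrite /Mv inE; case iI: (i \in I) => //=.
rewrite (hg i iI).
rewrite (eq_bigr (fun i' => (g i')%:E)); last by move=> j jI; rewrite hg.
apply/idP/idP.
- move=> /eqP he; apply/forallP => j; apply/implyP => jI.
  rewrite -lee_fin he.
  by apply: le_bigmax_cond.
- move=> /forallP hall; rewrite eq_le; apply/andP; split.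
  + by apply: le_bigmax_cond.
  + apply: bigmax_le; first exact: leNye.
    by move=> j jI; rewrite lee_fin; have := hall j; rewrite jI.
Qed.


Lemma fin_gap (R : realDomainType) (l : seq R) :
  exists2 d : R, 0 < d & forall x, x \in l -> x != 0 -> d <= `|x|.
Proof.
elim: l => [|y l [d d0 hd]]; first by exists 1.
have [->|y0] := eqVneq y 0.
  exists d => // x; rewrite inE => /orP[/eqP -> /eqP//|]; exact: hd.
exists (Num.min d `|y|); first by rewrite lt_min d0 normr_gt0.
move=> x; rewrite inE => /orP[/eqP -> _|xl x0]; first by rewrite ge_min lexx orbT.
by rewrite ge_min hd.
Qed.

Lemma le_sum_seq (R : realDomainType) (l : seq R) :
  (forall x, x \in l -> 0 <= x) -> forall x, x \in l -> x <= \sum_(y <- l) y.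
Proof.
elim: l => // y l IH hpos x; rewrite inE big_cons.
have hl : forall z, z \in l -> 0 <= z by move=> z zl; apply: hpos; rewrite inE zl orbT.
have s0 : 0 <= \sum_(z <- l) z by rewrite big_seq; apply: sumr_ge0 => z zl; apply: hl.
move=> /orP[/eqP ->|xl]; first by rewrite lerDl.
have := IH hl x xl; have := hpos y (mem_head _ _); lra.
Qed.

Definition nb (R : realType) n (b : expo n) : R := \sum_(j < n) `|(b 0 j)%:~R : R|.

Lemma nb_ge0 (R : realType) n (b : expo n) : 0 <= nb R b.
Proof. by apply: sumr_ge0 => j _. Qed.

Lemma vdot_pert (R : realType) n (w v : 'rV[R]_n) (lam eps : R) (b : expo n) :
  (forall j, `|w 0 j - lam * v 0 j| <= eps) ->
  `|vdot w b - lam * vdot v b| <= eps * nb R b.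
Proof.
move=> hj.
have -> : vdot w b - lam * vdot v b = \sum_(j < n) (w 0 j - lam * v 0 j) * (b 0 j)%:~R.
  rewrite /vdot mulr_sumr -sumrB; apply: eq_bigr => j _; rewrite mulrBl mulrA //.
apply: le_trans (ler_norm_sum _ _ _) _.
rewrite /nb mulr_sumr; apply: ler_sum => j _; rewrite normrM.
by apply: ler_wpM2r => //.
Qed.

Lemma vdotD (R : realType) n (w : 'rV[R]_n) (b c : expo n) :
  vdot w (b + c) = vdot w b + vdot w c.
Proof.
rewrite /vdot -big_split /=; apply: eq_bigr => j _.
by rewrite mxE intrD mulrDr.
Qed.

Lemma vdotB (R : realType) n (w : 'rV[R]_n) (b c : expo n) :
  vdot w (b - c) = vdot w b - vdot w c.
Proof.
rewrite /vdot -sumrB /=; apply: eq_bigr => j _.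
by rewrite !mxE intrD intrN mulrDr mulrN.
Qed.

Lemma initv_cases (R : realType) n (w : 'rV[R]_n) (f : lpoly R n) b :
  initv w f b = f b \/ initv w f b = 0.
Proof. by rewrite /initv; case: ifP; [left|right]. Qed.

Lemma initv_nz (R : realType) n (w : 'rV[R]_n) (f : lpoly R n) b :
  initv w f b != 0 -> initv w f b = f b.
Proof. by case: (initv_cases w f b) => -> // /eqP. Qed.

Lemma finsupp_initv (R : realType) n (w : 'rV[R]_n) (f : lpoly R n) :
  finsupp f -> finsupp (initv w f).
Proof.
move=> [s hs]; exists s => b hb; apply: hs; by rewrite -(initv_nz hb).
Qed.

Lemma Apos_nz (R : realType) n (w : 'rV[R]_n) (f : lpoly R n) :
  Apos (initv w f) -> exists b, f b != 0.
Proof. by move=> [_ [_ [b hb]]]; exists b; rewrite -(initv_nz hb). Qed.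


Definition good (R : realType) n K (a : 'I_K -> expo n) (I J : {set 'I_K})
  (w : 'rV[R]_n) (F : lvec R n K) :=
  (forall i, Apos (initv w (F i))) /\ (Ov a w :|: J) :&: Mv w I F != finset.set0.

Lemma local (R : realType) n K (a : 'I_K -> expo n) (I J : {set 'I_K})
  (v : 'rV[R]_n) (F : lvec R n K) :
  (forall i, finsupp (F i)) ->
  (forall i, Apos (initv v (F i))) ->
  (forall w : 'rV[R]_n, w != 0 ->
     (Ov a w :|: (Ov a v :|: J)) :&: Mv w (Mv v I F) (initv_vec v F) != finset.set0) ->
  exists2 eps : R, 0 < eps & forall (lam : R) (w : 'rV[R]_n), 0 < lam -> w != 0 ->
    (forall j, `|w 0 j - lam * v 0 j| < lam * eps) -> good a I J w F.
Proof.
move=> hF hA hH.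
have [s hs] := @choice _ _ (fun i (s : seq (expo n)) => forall b, F i b != 0 -> b \in s) hF.
have [bv hbv] := @choice _ _ (fun i b0 => F i b0 != 0 /\ forall b, F i b != 0 -> vdot v b <= vdot v b0)
  (fun i => top_wit v (hF i) (Apos_nz (hA i))).
pose d i := vdot v (bv i).
pose l := [seq vdot v b - d i | i <- enum 'I_K, b <- s i] ++
          [seq d i - d i' | i <- enum 'I_K, i' <- enum 'I_K] ++
          [seq vdot v (a i) | i <- enum 'I_K].
have [de de0 hde] := fin_gap l.
pose l2 := [seq nb R b | i <- enum 'I_K, b <- s i] ++ [seq nb R (a i) | i <- enum 'I_K].
pose C := 1 + \sum_(x <- l2) x.
have hl2 : forall x, x \in l2 -> 0 <= x.
  by move=> x; rewrite mem_cat => /orP[/allpairsPdep[i [b [_ _ ->]]]|/mapP[i _ ->]]; apply: nb_ge0.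
have C1 : forall x, x \in l2 -> x <= C - 1.
  by move=> x xl; have := le_sum_seq hl2 xl; rewrite /C; lra.
have C0 : 0 < C.
  rewrite /C; have : 0 <= \sum_(x <- l2) x by rewrite big_seq; apply: sumr_ge0 => x; apply: hl2.
  lra.
exists (de / (3 * C)); first by rewrite divr_gt0 // mulr_gt0.
move=> lam w lam0 w0 hw.
have pert : forall b, nb R b <= C - 1 -> `|vdot w b - lam * vdot v b| <= lam * (de / 3).
  move=> b hb.
  apply: le_trans (vdot_pert b (fun j => ltW (hw j))) _.
  have : lam * (de / (3 * C)) * nb R b <= lam * (de / (3 * C)) * C.
    apply: ler_wpM2l; first by rewrite mulr_ge0 // ltW // divr_gt0 // mulr_gt0.
    lra.
  have -> : lam * (de / (3 * C)) * C = lam * (de / 3).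
    by field; rewrite gt_eqF.
  done.
have pert_s : forall i b, b \in s i -> `|vdot w b - lam * vdot v b| <= lam * (de / 3).
  move=> i b bs; apply: pert; apply: C1.
  by rewrite mem_cat; apply/orP; left; apply/allpairsPdep; exists i, b; rewrite mem_enum.
have pert_a : forall i, `|vdot w (a i) - lam * vdot v (a i)| <= lam * (de / 3).
  move=> i; apply: pert; apply: C1.
  by rewrite mem_cat; apply/orP; right; apply: map_f; rewrite mem_enum.
have gap1 : forall i b, b \in s i -> vdot v b != d i -> de <= `|vdot v b - d i|.
  move=> i b bs hne; apply: hde; last by rewrite subr_eq0.
  by rewrite mem_cat; apply/orP; left; apply/allpairsPdep; exists i, b; rewrite mem_enum.
have gap2 : forall i i', d i != d i' -> de <= `|d i - d i'|.
  move=> i i' hne; apply: hde; last by rewrite subr_eq0.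
  rewrite mem_cat; apply/orP; right; rewrite mem_cat; apply/orP; left.
  by apply/allpairsPdep; exists i, i'; rewrite !mem_enum.
have gap3 : forall i, vdot v (a i) != 0 -> de <= `|vdot v (a i)|.
  move=> i hne; apply: hde => //.
  rewrite mem_cat; apply/orP; right; rewrite mem_cat; apply/orP; right.
  by apply: map_f; rewrite mem_enum.
have lde : 0 < lam * de by rewrite mulr_gt0.
have hG : forall i b, initv v (F i) b = if vdot v b == d i then F i b else 0.
  by move=> i; apply: initv_wit; case: (hbv i).
have [be hbe] := @choice _ _ (fun i b0 => initv v (F i) b0 != 0 /\
     forall b, initv v (F i) b != 0 -> vdot w b <= vdot w b0)
  (fun i => top_wit w (finsupp_initv v (hF i)) (match hA i with conj _ (conj _ h) => h end)).
have be_v : forall i, vdot v (be i) = d i /\ F i (be i) != 0.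
  move=> i; have := (hbe i).1; rewrite hG; case: ifP => [/eqP -> h|_]; [by split|by rewrite eqxx].
pose e i := vdot w (be i).
have ebound : forall i, `|e i - lam * d i| <= lam * (de / 3).
  move=> i; have [h1 h2] := be_v i; rewrite /e -h1; apply: (pert_s i); exact: hs.
have strict : forall i b, F i b != 0 -> vdot v b != d i -> vdot w b < e i.
  move=> i b hb hne.
  have bs := hs i b hb.
  have g1 := gap1 i b bs hne.
  have le1 : vdot v b <= d i by case: (hbv i) => _ /(_ b hb).
  have hp := pert_s i b bs.
  have he := ebound i.
  have : vdot v b <= d i - de.
    move: g1; rewrite ler_normr => /orP[]; lra.
  move=> h3.
  have : lam * vdot v b <= lam * (d i - de) by rewrite ler_wpM2l // ltW.
  move: hp he; rewrite !ler_norml; lra.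
have topF : forall i b, F i b != 0 -> vdot w b <= e i.
  move=> i b hb; have [heq|hne] := eqVneq (vdot v b) (d i).
    by apply: (hbe i).2; rewrite hG heq eqxx.
  exact: ltW (strict i b hb hne).
have degF : forall i, degv w (F i) = (e i)%:E.
  by move=> i; apply: degv_wit; [exact: (be_v i).2|exact: topF].
have degG : forall i, degv w (initv_vec v F i) = (e i)%:E.
  by move=> i; apply: degv_wit; [exact: (hbe i).1|exact: (hbe i).2].
have degFv : forall i, degv v (F i) = (d i)%:E.
  by move=> i; apply: degv_wit; [exact: (hbv i).1|exact: (hbv i).2].
split.
- move=> i; split; first exact: finsupp_initv.
  split.
  + move=> b; rewrite (initv_wit (be_v i).2 (topF i)).
    case: eqP => // heb.
    have [->|hb] := eqVneq (F i b) 0; first by [].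
    have [heq|hne] := eqVneq (vdot v b) (d i).
      have : initv v (F i) b = F i b by rewrite hG heq eqxx.
      by move=> <-; case: (hA i) => _ [].
    by have := strict i b hb hne; rewrite heb ltxx.
  + exists (be i); rewrite (initv_wit (be_v i).2 (topF i)) eqxx.
    exact: (be_v i).2.
- have /set0Pn [x] := hH w w0.
  rewrite finset.in_setI => /andP[hO].
  rewrite (MvP _ (fun i _ => degG i)) => /andP[xI' /forallP hx].
  move: xI'; rewrite (MvP _ (fun i _ => degFv i)) => /andP[xI /forallP hdx].
  apply/set0Pn; exists x; rewrite finset.in_setI.
  apply/andP; split.
    move: hO; rewrite !finset.in_setU => /orP[->//|/orP[hv|->]]; last by rewrite orbT.
    apply/orP; left.
    rewrite /Ov inE in hv; rewrite /Ov inE.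
    have g3 := gap3 x hv.
    have hp := pert_a x.
    apply: contraTneq g3 => h; rewrite h in hp.
    rewrite -ltNge; move: hp; rewrite sub0r normrN normrM (gtr0_norm lam0).
    move=> hp.
    have : lam * `|vdot v (a x)| <= lam * (de / 3) by [].
    move=> h2; rewrite -(ltr_pM2l lam0); lra.
  rewrite (MvP _ (fun i _ => degF i)) xI /=.
  apply/forallP => i'; apply/implyP => i'I.
  have hdi' := hdx i'; rewrite i'I /= in hdi'.
  have [heq|hne] := eqVneq (d i') (d x).
    have := hx i'; rewrite (MvP _ (fun i _ => degFv i)) i'I /= => /implyP; apply.
    apply/forallP => i''; apply/implyP => i''I.
    by have := hdx i''; rewrite i''I heq.
  have g2' : de <= `|d x - d i'| by apply: gap2; rewrite eq_sym.
  have h1 := ebound i'; have h2 := ebound x.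
  have : d i' <= d x - de by move: g2'; rewrite ler_normr => /orP[]; lra.
  move=> h3.
  have : lam * d i' <= lam * (d x - de) by rewrite ler_wpM2l // ltW.
  move: h1 h2; rewrite !ler_norml; lra.
Qed.


Definition shiftsum (R : realType) n K (G : 'rV[R]_n -> lvec R n K)
  (c : 'rV[R]_n -> expo n) (s : seq 'rV[R]_n) : lvec R n K :=
  fun i b => \sum_(v <- s) G v i (b - c v).

Definition delta (R : realType) n (c : expo n) : lpoly R n :=
  fun c0 => if c0 == c then 1 else 0.

Lemma shiftsum_M (R : realType) n K (M : set (lvec R n K)) (G : 'rV[R]_n -> lvec R n K)
  (c : 'rV[R]_n -> expo n) (s : seq 'rV[R]_n) :
  Asubmodule M -> (forall v, v \in s -> M (G v)) -> M (shiftsum G c s).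
Proof.
move=> [_ h0 hadd hmul]; elim: s => [|v s IH] hs.
  have -> : shiftsum G c [::] = (fun _ _ => 0) by apply: funext => i; apply: funext => b; rewrite /shiftsum big_nil.
  exact: h0.
have Mv : M (fun i => lmul (delta R (c v)) (G v i) [:: c v]).
  apply: hmul; last exact: hs (mem_head _ _).
  - by exists [:: c v] => c0; rewrite /delta; case: ifP => [/eqP ->|]; rewrite ?mem_head ?eqxx.
  - by [].
  - by move=> c0; rewrite /delta; case: ifP => [/eqP ->|]; rewrite ?mem_head ?eqxx.
have := hadd _ _ Mv (IH (fun x xs => hs x (@mem_behead _ (v :: s) _ xs))).
congr M; apply: funext => i; apply: funext => b.
by rewrite /shiftsum big_cons /lmul big_seq1 /delta eqxx mul1r.
Qed.

Lemma sum_nz (R : realType) (T : eqType) (s : seq T) (F : T -> R) :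
  \sum_(x <- s) F x != 0 -> exists2 x, x \in s & F x != 0.
Proof.
move=> h; case: (pselect (exists2 x, x \in s & F x != 0)) => // hn.
exfalso; move/eqP: h; apply.
rewrite big_seq; apply: big1 => x xs.
case: (eqVneq (F x) 0) => // hx; exfalso; apply: hn; by exists x.
Qed.


Lemma glue_good (R : realType) n K (a : 'I_K -> expo n) (I J : {set 'I_K}) (w : 'rV[R]_n)
  (s : seq 'rV[R]_n) (G : 'rV[R]_n -> lvec R n K) (c : 'rV[R]_n -> expo n) :
  (forall v, v \in s -> forall i, finsupp (G v i) /\ exists b, G v i b != 0) ->
  (forall i, finsupp (shiftsum G c s i)) ->
  (exists v0, v0 \in s) -> (exists i0, i0 \in I) ->
  (forall v i b0, v \in s -> G v i b0 != 0 ->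
     (forall b, G v i b != 0 -> vdot w b <= vdot w b0) ->
     (forall v' b', v' \in s -> G v' i b' != 0 -> vdot w (c v' + b') <= vdot w (c v + b0)) ->
     good a I J w (G v)) ->
  good a I J w (shiftsum G c s).
Proof.
move=> hG hfs [v0 v0s] [i0 i0I] hk.
pose P v i b := v \in s -> G v i b != 0 /\ forall b', G v i b' != 0 -> vdot w b' <= vdot w b.
have hex : forall v, exists fb : 'I_K -> expo n, forall i, P v i (fb i).
  move=> v.
  have hi : forall i, exists b, P v i b.
    move=> i; case: (pselect (v \in s)) => vs; last by exists 0.
    have [h1 h2] := hG v vs i.
    have [b [hb1 hb2]] := top_wit w h1 h2.
    by exists b.
  have [fb hfb] := @choice _ _ (P v) hi; by exists fb.
have [bw hbw] := @choice _ _ (fun v (fb : 'I_K -> expo n) => forall i, P v i (fb i)) hex.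
pose D v i := vdot w (c v + bw v i).
have hex2 : forall i, exists x, x \in s /\ forall v, v \in s -> D v i <= D x i.
  move=> i; have [x xs hx] := @seq_argmax _ _ (fun v => D v i) s v0 v0s.
  by exists x.
have [vi hvi] := @choice _ _ (fun i x => x \in s /\ forall v, v \in s -> D v i <= D x i) hex2.
pose Di i := D (vi i) i.
have argg : forall v i, v \in s -> Di i <= D v i -> good a I J w (G v).
  move=> v i vs hD; have [h1 h2] := hbw v i vs.
  apply: (hk v i (bw v i)) => // v' b' v's hb'.
  have [_ h3] := hbw v' i v's.
  have := h3 b' hb'; have := (hvi i).2 v' v's.
  rewrite /Di /D !vdotD in hD *; lra.
have upper : forall i beta, shiftsum G c s i beta != 0 -> vdot w beta <= Di i.
  move=> i beta /sum_nz [v vs hv].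
  have [_ h3] := hbw v i vs; have := h3 _ hv.
  have := (hvi i).2 v vs; rewrite /Di /D vdotB !vdotD; lra.
have termpos : forall i beta, vdot w beta = Di i -> forall v, v \in s -> 0 <= G v i (beta - c v).
  move=> i beta hb v vs.
  have [->|hnz] := eqVneq (G v i (beta - c v)) 0; first by [].
  have [h1 h3] := hbw v i vs.
  have le1 := h3 _ hnz.
  have le2 := (hvi i).2 v vs.
  have hD : Di i <= D v i by move: le1 hb; rewrite /Di /D vdotB !vdotD; lra.
  have [hpos _] := argg v i vs hD.
  have [_ [hnn _]] := hpos i.
  have := hnn (beta - c v).
  rewrite (initv_wit h1 h3).
  have -> : vdot w (beta - c v) == vdot w (bw v i).
    apply/eqP; move: le1 le2 hD hb; rewrite /Di /D vdotB !vdotD; lra.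
  by [].
pose beta0 i := c (vi i) + bw (vi i) i.
have beta0E : forall i, beta0 i - c (vi i) = bw (vi i) i by move=> i; rewrite /beta0 addrC addKr.
have fpos : forall i, 0 < shiftsum G c s i (beta0 i).
  move=> i; rewrite /shiftsum (big_rem _ (hvi i).1) /= beta0E.
  have [h1 _] := hbw (vi i) i (hvi i).1.
  have h0 : 0 <= G (vi i) i (bw (vi i) i).
    by have := termpos i (beta0 i) erefl (vi i) (hvi i).1; rewrite beta0E.
  have : 0 <= \sum_(y <- rem (vi i) s) G y i (beta0 i - c y).
    rewrite big_seq; apply: sumr_ge0 => y ys.
    exact: termpos i (beta0 i) erefl y (mem_rem ys).
  have h0' : 0 < G (vi i) i (bw (vi i) i) by rewrite lt_def h1 h0.
  lra.
have topf : forall i beta, shiftsum G c s i beta != 0 -> vdot w beta <= vdot w (beta0 i).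
  exact: upper.
have fnz : forall i, shiftsum G c s i (beta0 i) != 0 by move=> i; rewrite gt_eqF ?fpos.
have degf : forall i, degv w (shiftsum G c s i) = (Di i)%:E.
  by move=> i; apply: degv_wit; [exact: fnz|exact: topf].
split.
- move=> i; split; first exact: finsupp_initv.
  split.
  + move=> b; rewrite (initv_wit (fnz i) (topf i)); case: ifP => // /eqP hb.
    rewrite /shiftsum big_seq; apply: sumr_ge0 => v vs; exact: termpos i b hb v vs.
  + exists (beta0 i); rewrite (initv_wit (fnz i) (topf i)) eqxx; exact: fnz.
- have hex3 : exists2 x, x \in enum I & forall y, y \in enum I -> Di y <= Di x.
    by apply: (@seq_argmax _ _ Di _ i0); rewrite mem_enum.
  case: hex3 => istar; rewrite mem_enum => istarI hmax.
  pose vs := vi istar.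
  have vss : vs \in s := (hvi istar).1.
  have [_ hgood] := argg vs istar vss (lexx _).
  have [x] := set0Pn _ hgood.
  rewrite finset.in_setI => /andP[hO hMx].
  have degG : forall i, i \in I -> degv w (G vs i) = (vdot w (bw vs i))%:E.
    by move=> i _; have [h1 h2] := hbw vs i vss; apply: degv_wit.
  move: hMx; rewrite (MvP _ degG) => /andP[xI /forallP hx].
  apply/set0Pn; exists x; rewrite finset.in_setI hO /=.
  rewrite (MvP _ (fun i _ => degf i)) xI /=.
  apply/forallP => i'; apply/implyP => i'I.
  have h1 := hmax i'; rewrite mem_enum i'I in h1; have {}h1 := h1 erefl.
  have h2 := hx istar; rewrite istarI /= in h2.
  have h3 := (hvi x).2 vs vss.
  move: h1 h2 h3; rewrite /Di /D /vs !vdotD; lra.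
Qed.

From mathcomp Require Import topology normedtype.
Import numFieldNormedType.Exports.
Local Open Scope classical_set_scope.

Lemma cont_sum (T : topologicalType) (R : realType) (I : Type) (l : seq I)
  (f : I -> T -> R) : (forall i, continuous (f i)) ->
  continuous (fun x => \sum_(i <- l) f i x).
Proof.
move=> hf; elim: l => [|i l IH].
  under eq_fun do rewrite big_nil; exact: cst_continuous.
under eq_fun do rewrite big_cons.
by move=> x; apply: continuousD; [exact: hf|exact: IH].
Qed.

Definition dotr (R : realType) n (u v : 'rV[R]_n) := \sum_(j < n) u 0 j * v 0 j.

Lemma cont_dot (R : realType) n (v : 'rV[R]_n) : continuous (fun u : 'rV[R]_n => dotr u v).
Proof.
apply: cont_sum => j x; apply: continuousM; first exact: coord_continuous.
exact: cst_continuous.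
Qed.

Lemma cont_sq (R : realType) n : continuous (fun u : 'rV[R]_n => dotr u u).
Proof.
apply: cont_sum => j x; apply: continuousM; exact: coord_continuous.
Qed.

Definition Sph (R : realType) n := [set u : 'rV[R]_n | dotr u u = 1].
Arguments Sph : clear implicits.

Lemma Sph_compact (R : realType) n : compact (Sph R n).
Proof.
have Bc : compact [set v : 'rV[R]_n | forall i, `[(-1 : R), 1]%classic (v ord0 i)].
  by apply: (@rV_compact _ n (fun=> `[(-1 : R), 1]%classic)) => _; apply: segment_compact.
apply: (subclosed_compact _ Bc).
  have -> : Sph R n = (fun u => dotr u u) @^-1` [set 1].
    by [].
  apply: preimage_closed; last exact: closed_eq.
  by move=> x _; apply: cont_sq.
move=> u; rewrite /Sph /= => hu i.
rewrite /= in_itv /= -ler_norml.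
have : u 0 i ^+ 2 <= dotr u u.
  rewrite /dotr (bigD1 i) //= -expr2 lerDl; apply: sumr_ge0 => j _; rewrite -expr2 sqr_ge0 //.
rewrite hu => h.
rewrite -(expr_le1 (n:=2)) // ?normr_ge0 // real_normK //; exact: num_real.
Qed.

Local Close Scope classical_set_scope.

Lemma abs_lt_sq (R : realType) (x y : R) : 0 <= y -> x ^+ 2 < y ^+ 2 -> `|x| < y.
Proof.
move=> y0 h; rewrite ltr_norml; apply/andP; split; nra.
Qed.

Lemma coord_le (R : realType) n (w : 'rV[R]_n) l : w 0 l ^+ 2 <= dotr w w.
Proof.
rewrite /dotr (bigD1 l) //= -expr2 lerDl; apply: sumr_ge0 => j _; rewrite -expr2 sqr_ge0 //.
Qed.

Lemma coord_abs (R : realType) n (w : 'rV[R]_n) (r : R) l :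
  0 <= r -> r ^+ 2 = dotr w w -> `|w 0 l| <= r.
Proof.
move=> r0 hr; have := coord_le w l; rewrite -hr => h.
rewrite -(ler_pXn2r (n:=2)) ?nnegrE ?normr_ge0 // real_normK //; exact: num_real.
Qed.

Lemma cap_lemma (R : realType) n (w v : 'rV[R]_n) (r t e : R) :
  dotr v v = 1 -> 0 < r -> r ^+ 2 = dotr w w -> 0 < e -> 2 * (1 - t) <= e ^+ 2 ->
  t * r < dotr w v -> forall l, `|w 0 l - r * v 0 l| < r * e.
Proof.
move=> hv r0 hr e0 hte hwv l.
have hsum : dotr (w - r *: v) (w - r *: v) = dotr w w - 2 * r * dotr w v + r ^+ 2 * dotr v v.
  rewrite /dotr mulr_sumr mulr_sumr -sumrB -big_split /=; apply: eq_bigr => j _.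
  rewrite !mxE; ring.
have h1 := coord_le (w - r *: v) l.
rewrite hsum hv -hr mulr1 !mxE in h1.
apply: abs_lt_sq; first by rewrite mulr_ge0 // ltW.
have : r * (t * r) < r * dotr w v by rewrite ltr_pM2l.
have : r ^+ 2 * (2 * (1 - t)) <= r ^+ 2 * e ^+ 2 by rewrite ler_wpM2l // sqr_ge0.
move: h1; rewrite exprMn; nra.
Qed.

Lemma vdot_bound (R : realType) n (w : 'rV[R]_n) (r : R) (b : expo n) :
  (forall l, `|w 0 l| <= r) -> `|vdot w b| <= r * nb R b.
Proof.
move=> hw; have := @vdot_pert R n w w 0 r b.
rewrite mul0r subr0; apply => j; rewrite mul0r subr0; exact: hw.
Qed.

Lemma cvec_bound (R : realType) n (w v : 'rV[R]_n) (r k : R) :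
  (forall l, `|w 0 l| <= r) ->
  `|vdot w (\row_l Num.floor (k * v 0 l)) - k * dotr w v| <= n%:R * r.
Proof.
move=> hw.
have -> : vdot w (\row_l Num.floor (k * v 0 l)) - k * dotr w v =
   \sum_(l < n) w 0 l * ((Num.floor (k * v 0 l))%:~R - k * v 0 l).
  rewrite /vdot /dotr mulr_sumr -sumrB; apply: eq_bigr => l _; rewrite mxE; ring.
apply: le_trans (ler_norm_sum _ _ _) _.
have -> : n%:R * r = \sum_(l < n) r by rewrite sumr_const card_ord mulr_natl.
apply: ler_sum => l _; rewrite normrM.
have h1 := floor_le (k * v 0 l); have h2 := floorD1_gt (k * v 0 l).
rewrite intrD in h2.
have : `|(Num.floor (k * v 0 l))%:~R - k * v 0 l| <= 1 :> R.
  rewrite ler_norml; apply/andP; split; lra.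
move=> h3; rewrite -[r]mulr1; apply: ler_pM => //; exact: hw.
Qed.

Lemma fin_bound (R : realType) (T : eqType) (s : seq T) (P : T -> R -> Prop) :
  (forall x, x \in s -> exists B, P x B) ->
  (forall x B B', P x B -> B <= B' -> P x B') ->
  exists B, 0 <= B /\ forall x, x \in s -> P x B.
Proof.
move=> hex hmono; elim: s hex => [|y s IH] hex; first by exists 0.
have [B1 [B10 hB1]] := IH (fun x xs => hex x (@mem_behead _ (y :: s) _ xs)).
have [B2 hB2] := hex y (mem_head _ _).
exists (Num.max B1 B2); split; first by rewrite le_max B10.
move=> x; rewrite inE => /orP[/eqP ->|xs].
  by apply: hmono hB2 _; rewrite le_max lexx orbT.
by apply: hmono (hB1 x xs) _; rewrite le_max lexx.
Qed.

From mathcomp Require Import finmap.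

Theorem mainTheorem12 (R : realType) (n K : nat) (M : set (lvec R n K))
  (hM : Asubmodule M) (a : 'I_K -> expo n) (I J : {set 'I_K}) :
  (forall v : 'rV[R]_n, v != 0 ->
     exists2 fv : lvec R n K, M fv &
       (forall i, Apos (initv v (fv i))) /\
       (let I' := Mv v I fv in
        let J' := Ov a v :|: J in
        forall w : 'rV[R]_n, w != 0 ->
          (Ov a w :|: J') :&: Mv w I' (initv_vec v fv) != finset.set0)) ->
  exists2 f : lvec R n K, M f &
    (forall v : 'rV[R]_n, v != 0 -> forall i, Apos (initv v (f i))) /\
    (forall v : 'rV[R]_n, v != 0 -> (Ov a v :|: J) :&: Mv v I f != finset.set0).
Proof.
move=> H.
have hMfs := hM; case: hMfs => hfs _ _ _.
pose Data (v : 'rV[R]_n) (p : lvec R n K * R) := v != 0 ->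
  [/\ M p.1, 0 < p.2, (forall i, Apos (initv v (p.1 i))) &
      forall (lam : R) (w : 'rV[R]_n), 0 < lam -> w != 0 ->
        (forall j, `|w 0 j - lam * v 0 j| < lam * p.2) -> good a I J w p.1].
have hdata : forall v, exists p, Data v p.
  move=> v; have [v0|vn0] := eqVneq v 0.
    by exists ((fun _ _ => 0), 1); rewrite /Data v0 eqxx.
  have [fv Mfv [hA hW]] := H v vn0.
  have [ep ep0 hep] := local (hfs _ Mfv) hA hW.
  by exists (fv, ep) => _; split.
have [pd hpd] := choice hdata.
pose F v := (pd v).1.
pose ep v := (pd v).2.
have Sph_nz : forall v, Sph R n v -> v != 0.
  move=> v; rewrite /Sph /= => hv; apply/eqP => v0; move: hv; rewrite v0 /dotr.
  under eq_bigr do rewrite mxE mul0r.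
  by rewrite big1 // => /esym/eqP; rewrite oner_eq0.
pose m v := Num.min (ep v) 1.
pose t v := 1 - m v ^+ 2 / 2.
pose tp v := (1 + t v) / 2.
pose kap v := 2 * t v / (1 - t v).
have hm : forall v, Sph R n v -> [/\ 0 < m v, m v <= 1 & m v <= ep v].
  move=> v hv; have [_ ep0 _ _] := hpd v (Sph_nz v hv).
  rewrite /m; split; [by rewrite lt_min ep0 ltr01 | by rewrite ge_min lexx orbT | by rewrite ge_min lexx].
have ht : forall v, Sph R n v -> [/\ 1/2 <= t v, t v < 1 & 2 * (1 - t v) <= ep v ^+ 2].
  move=> v hv; have [h1 h2 h3] := hm v hv.
  have : m v ^+ 2 <= 1 by rewrite expr_le1 // ltW.
  have : 0 < m v ^+ 2 by rewrite exprn_gt0.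
  have : m v ^+ 2 <= ep v ^+ 2 by rewrite ler_pXn2r ?nnegrE // ltW // (lt_le_trans h1 h3).
  rewrite /t; split; lra.
pose U v := [set u : 'rV[R]_n | tp v < dotr u v]%classic.
have Uopen : forall v, Sph R n v -> open (U v).
  move=> v _; apply: (@open_comp _ _ (fun u : 'rV[R]_n => dotr u v) [set x | tp v < x]%classic); last exact: open_gt.
  by move=> x _; apply: cont_dot.
have Scov : (Sph R n `<=` cover (Sph R n) U)%classic.
  move=> u hu; exists u => //; rewrite /U /= hu.
  have [_ h2 _] := ht u hu; rewrite /tp; lra.
have := @Sph_compact R n; rewrite compact_cover => /(_ _ _ _ Uopen Scov) [D' hD' hcov].
have D'S : forall v, v \in D' -> Sph R n v.
  by move=> v vD; have := hD' v vD; rewrite in_setE.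
have dat : forall v, v \in D' -> [/\ M (F v), 0 < ep v, (forall i, Apos (initv v (F v i))) &
      forall (lam : R) (w : 'rV[R]_n), 0 < lam -> w != 0 ->
        (forall j, `|w 0 j - lam * v 0 j| < lam * ep v) -> good a I J w (F v)].
  by move=> v vD; exact: hpd v (Sph_nz v (D'S v vD)).
have hex1 : forall x, x \in [seq (v, i) | v <- (D' : seq _), i <- enum 'I_K] ->
    exists B : R, forall b, F x.1 x.2 b != 0 -> nb R b <= B.
  case=> v i /allpairsP [[v' i'] [/= vD _ [-> ->]]].
  have [MF _ _ _] := dat v' vD.
  have [sq hsq] := hfs _ MF i'.
  exists (\sum_(x <- map (@nb R n) sq) x) => b hb /=.
  apply: le_sum_seq; first by move=> x /mapP[y _ ->]; exact: nb_ge0.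
  by apply: map_f; apply: hsq.
have [B [B0 hB]] := @fin_bound R _ _ (fun x B => forall b, F x.1 x.2 b != 0 -> nb R b <= B)
   hex1 (fun x B B' h hle b hb => le_trans (h b hb) hle).
have hB' : forall v i b, v \in D' -> F v i b != 0 -> nb R b <= B.
  move=> v i b vD hb; apply: (hB (v, i)) => //.
  by apply: allpairs_f; rewrite ?mem_enum.
have htD : forall v, v \in D' -> [/\ 1/2 <= t v, t v < 1 & 2 * (1 - t v) <= ep v ^+ 2].
  by move=> v vD; exact: ht v (D'S v vD).
have kap0 : forall v, v \in D' -> 0 < kap v.
  move=> v vD; have [h1 h2 _] := htD v vD.
  rewrite /kap divr_gt0 //; lra.
pose Ck := 2 * (n%:R + B) + 1.
have Ck0 : 0 < Ck by rewrite /Ck; have : 0 <= n%:R :> R by []; lra.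
pose Lw := 1 + Ck * \sum_(v <- (D' : seq _)) kap v.
have sumk : forall v, v \in D' -> kap v <= \sum_(v <- (D' : seq _)) kap v.
  move=> v vD; rewrite -(big_map kap xpredT id); apply: le_sum_seq.
    by move=> x /mapP[y yD ->]; apply: ltW; apply: kap0.
  exact: map_f.
have sumk0 : 0 <= \sum_(v <- (D' : seq _)) kap v.
  by rewrite big_seq; apply: sumr_ge0 => v vD; apply: ltW; apply: kap0.
have Lw0 : 0 < Lw by rewrite /Lw; have := mulr_ge0 (ltW Ck0) sumk0; lra.
have Lwk : forall v, v \in D' -> Ck * kap v <= Lw.
  move=> v vD; have : Ck * kap v <= Ck * \sum_(v <- (D' : seq _)) kap v.
    by rewrite ler_wpM2l ?sumk // ltW.
  rewrite /Lw; lra.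
pose c (v : 'rV[R]_n) : expo n := \row_l Num.floor (Lw / t v * v 0 l).
pose f := shiftsum F c D'.
have Mf : M f by apply: shiftsum_M => // v vD; case: (dat v vD).
suff hgood : forall w : 'rV[R]_n, w != 0 -> good a I J w f.
  exists f => //; split => w w0; by case: (hgood w w0).
move=> w w0.
have [l wl] : exists l, w 0 l != 0.
  case: (pselect (exists l, w 0 l != 0)) => // hn; exfalso; move/eqP: w0; apply.
  apply/rowP => l; rewrite mxE; case: (eqVneq (w 0 l) 0) => // h; exfalso; apply: hn; by exists l.
have dw0 : 0 < dotr w w.
  apply: lt_le_trans (coord_le w l); by rewrite lt_def sqr_ge0 expf_eq0 /= wl andbT.
pose r := Num.sqrt (dotr w w).
have r0 : 0 < r by rewrite sqrtr_gt0.
have hr : r ^+ 2 = dotr w w by rewrite sqr_sqrtr // ltW.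
have hwl : forall l, `|w 0 l| <= r by move=> l'; apply: coord_abs => //; exact: ltW.
pose u := r^-1 *: w.
have dotZ : forall (k : R) (x y : 'rV[R]_n), dotr (k *: x) y = k * dotr x y.
  by move=> k x y; rewrite /dotr mulr_sumr; apply: eq_bigr => j _; rewrite !mxE mulrA.
have hu : Sph R n u.
  rewrite /Sph /= /u dotZ /dotr.
  under eq_bigr do rewrite mxE.
  have -> : \sum_i w 0 i * (r^-1 * w 0 i) = r^-1 * dotr w w by rewrite /dotr mulr_sumr; apply: eq_bigr => i _; rewrite mulrCA.
  by rewrite -hr; field; rewrite gt_eqF.
have [j jD hUj] := hcov u hu.
have jD' : j \in D' by [].
have hj : tp j * r < dotr w j.
  move: hUj; rewrite /U /= /u dotZ => h.
  have : r * tp j < r * (r^-1 * dotr w j) by rewrite ltr_pM2l.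
  have -> : r * (r^-1 * dotr w j) = dotr w j by field; rewrite gt_eqF.
  by rewrite mulrC.
have goodcap : forall v, v \in D' -> t v * r < dotr w v -> good a I J w (F v).
  move=> v vD h; have [_ ep0 _ hloc] := dat v vD; apply: (hloc r w r0 w0).
  apply: (@cap_lemma R n w v r (t v) (ep v)) => //; first exact: D'S v vD.
  by case: (htD v vD).
have goodj : good a I J w (F j).
  apply: goodcap => //; have [h1 h2 _] := htD j jD'.
  have : t j * r < tp j * r by rewrite ltr_pM2r // /tp; lra.
  lra.
apply: glue_good => //.
- move=> v vD i; have [MF _ hA _] := dat v vD; split; first exact: hfs.
  exact: Apos_nz (hA i).
- by move=> i; apply: hfs.
- by exists j.
- have [_ /set0Pn [x]] := goodj.
  rewrite finset.in_setI => /andP[_]; rewrite /Mv finset.inE => /andP[xI _].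
  by exists x.
move=> v i b0 vD hb0 htop hv'.
have [_ _ hAj _] := dat j jD'.
have [b' hb'] := Apos_nz (hAj i).
have ineq := hv' j b' jD' hb'.
rewrite !vdotD in ineq.
have E1 := cvec_bound v (Lw / t v) hwl.
have E2 := cvec_bound j (Lw / t j) hwl.
have E3 := vdot_bound b0 hwl.
have E4 := vdot_bound b' hwl.
have E5 : r * nb R b0 <= r * B by apply: ler_wpM2l; [exact: ltW | exact: hB' v i b0 vD hb0].
have E6 : r * nb R b' <= r * B by apply: ler_wpM2l; [exact: ltW | exact: hB' j i b' jD' hb'].
have [tj1 tj2 _] := htD j jD'.
have [tv1 tv2 _] := htD v vD.
have eA : Lw / t j * tp j = Lw + Lw / kap j.
  rewrite /tp /kap; field; apply/andP; split; rewrite gt_eqF //; lra.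
have hk : Ck <= Lw / kap j by rewrite ler_pdivlMr ?kap0 // Lwk.
have A0 : 0 < Lw / t j by rewrite divr_gt0 //; lra.
have p1 : Lw / t j * (tp j * r) < Lw / t j * dotr w j by rewrite ltr_pM2l.
have p2 : Lw / t j * (tp j * r) = (Lw + Lw / kap j) * r by rewrite mulrA eA.
have p3 : (Lw + Ck) * r <= (Lw + Lw / kap j) * r by apply: ler_wpM2r; [exact: ltW | rewrite lerD2l].

have key : Lw * r < Lw / t v * dotr w v.
  move: E1 E2 E3 E4; rewrite !ler_norml /Ck in p3 *; lra.
apply: goodcap => //.
rewrite ltNge; apply/negP => hle.
have : Lw / t v * dotr w v <= Lw / t v * (t v * r).
  by rewrite ler_wpM2l // ltW // divr_gt0 //; lra.
have -> : Lw / t v * (t v * r) = Lw * r.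
  by field; apply/eqP; lra.
lra.
Qed.
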